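(* Let $\mathcal{G}=(N,\mathcal{W})$ be an SVG and let $i\neq j$ be players in $N$, where $j$ is a YES-blocker (or a NO-blocker) of $\mathcal{G}$. Let $\hat{\mathcal{G}}=\mathcal{G}^{j\to i}$ be the game obtained when $j$ fully donates its vote to $i$. Then $$RM'_i(\hat{\mathcal{G}})\le RM'_i(\mathcal{G})+RM'_j(\mathcal{G}).$$
   Context: A simple voting game (SVG) is a pair $\mathcal{G}=(N,\mathcal{W})$ with $N$ a nonempty finite set of $n$ players and $\mathcal{W}\subseteq 2^N$ monotone, $\emptyset\notin\mathcal{W}$, $N\in\mathcal{W}$. Divisions are identified with their YES-sets $S\subseteq N$; $S$ is winning iff $S\in\mathcal{W}$. Decisiveness and success: - Player $k$ is YES-decisive in $S$ if $k\in S\in\mathcal{W}$ and $S\setminus\{k\}\notin\mathcal{W}$. - Player $k$ is NO-decisive in $S$ if $k\notin S\notin\mathcal{W}$ and $S\cup\{k\}\in\mathcal{W}$. - Player $k$ is decisive if it is either. - Player $k$ is successful in $S$ if ($k\in S\in\mathcal{W}$) or ($k\notin S\notin\mathcal{W}$). Loyal children: if $S\in\mathcal{W}$, the loyal children are the sets $S\setminus\{m\}\in\mathcal{W}$ with $m\in S$. If $S\notin\mathcal{W}$, they are the sets $S\cup\{m\}\notin\mathcal{W}$ with $m\notin S$. The recursive efficacy score $\alpha_k(S)$ is defined by: - $\alpha_k(S)=1$ if $k$ is decisive in $S$; - $\alpha_k(S)=0$ if $k$ is not successful in $S$; - otherwise, $\alpha_k(S)$ is the average of $\alpha_k$ over the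 loyal children of $S$. The a priori Recursive Measure is $RM'_k=2^{-n}\sum_{S\subseteq N}\alpha_k(S)$. Blockers: $b$ is a YES-blocker if $b\in S$ for all $S\in\mathcal{W}$, and a NO-blocker if $b\notin S$ for all $S\notin\mathcal{W}$. Donation game: $\mathcal{G}^{j\to i}$ is the SVG on the same player set $N$ whose winning sets are determined as follows. For $S\subseteq N\setminus\{i,j\}$: - $S\cup\{i,j\}$ and $S\cup\{i\}$ are winning iff $S\cup\{i,j\}\in\mathcal{W}$; - $S\cup\{j\}$ and $S$ are winning iff $S\in\mathcal{W}$. In particular $j$ is a dummy in $\mathcal{G}^{j\to i}$. *)

(* Defs.v *)
From mathcomp Require Import all_boot all_order all_algebra.
Set Implicit Arguments. Unset Strict Implicit. Unset Printing Implicit Defensive.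
Import Order.TTheory GRing.Theory Num.Theory.
Local Open Scope ring_scope.

Section SVG.
Variable N : finType.
Implicit Types (W : {set N} -> bool) (S : {set N}) (k : N).

Definition is_svg W : Prop :=
  [/\ forall S T : {set N}, S \subset T -> W S -> W T, ~~ W set0 & W setT].

Definition yes_decisive W k S := [&& k \in S, W S & ~~ W (S :\ k)].
Definition no_decisive W k S := [&& k \notin S, ~~ W S & W (k |: S)].
Definition decisive W k S := yes_decisive W k S || no_decisive W k S.
Definition successful W k S := ((k \in S) && W S) || ((k \notin S) && ~~ W S).

Definition loyal_children W S : {set {set N}} :=
  if W S then [set S :\ m | m in [set m in S | W (S :\ m)]]
  else [set m |: S | m in [set m in ~: S | ~~ W (m |: S)]].

(* alpha with explicit recursion fuel; along loyal children a winning set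
   shrinks and a losing set grows, so recursion depth is at most #|N|, and
   fuel #|N|.+1 computes the recursive definition exactly. *)
Fixpoint alpha_fuel (fuel : nat) W k S : rat :=
  match fuel with
  | 0 => 0
  | f.+1 =>
    if decisive W k S then 1
    else if ~~ successful W k S then 0
    else (\sum_(C in loyal_children W S) alpha_fuel f W k C)
           / (#|loyal_children W S|)%:R
  end.

Definition alpha W k S : rat := alpha_fuel #|N|.+1 W k S.

Definition RM W k : rat := (\sum_(S : {set N}) alpha W k S) / (2 ^ #|N|)%:R.

Definition yes_blocker W b := forall S, W S -> b \in S.
Definition no_blocker W b := forall S, ~~ W S -> b \notin S.

Definition donate W j i : {set N} -> bool :=
  fun S => if i \in S then W (j |: S) else W (S :\ j).

End SVG.

(* Main.v *)
Require Import Defs.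
From mathcomp Require Import all_boot all_order all_algebra.
From mathcomp Require Import ring lra zify.
From Stdlib Require Import FunctionalExtensionality.
Set Implicit Arguments. Unset Strict Implicit. Unset Printing Implicit Defensive.
Import Order.TTheory GRing.Theory Num.Theory.
Local Open Scope ring_scope.

Definition mu (N : finType) (W : {set N} -> bool) (S : {set N}) : nat :=
  if W S then #|S| else #|~: S|.

Lemma setC_U1 (N : finType) (m : N) (S : {set N}) : ~: (m |: S) = ~: S :\ m.
Proof. by apply/setP=> x; rewrite !inE negb_or andbC. Qed.

Lemma setC_D1 (N : finType) (m : N) (S : {set N}) : ~: (S :\ m) = m |: ~: S.
Proof. by apply/setP=> x; rewrite !inE negb_and negbK. Qed.

Lemma card_compl_lt (N : finType) (m : N) (S : {set N}) :
  m \notin S -> (#|~: (m |: S)| < #|~: S|)%N.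
Proof.
move=> mS; rewrite setC_U1 [X in (_ < X)%N](cardsD1 m) inE mS.
by rewrite add1n ltnS.
Qed.

Lemma lc_mu (N : finType) (W : {set N} -> bool) (S C : {set N}) :
  C \in loyal_children W S -> (mu W C < mu W S)%N.
Proof.
rewrite /loyal_children /mu; case: ifP => WS.
- case/imsetP => m; rewrite inE => /andP[mS WC] ->; rewrite WC.
  by rewrite [X in (_ < X)%N](cardsD1 m) mS add1n ltnS.
- case/imsetP => m; rewrite inE => /andP[mS WC] ->; rewrite (negbTE WC).
  by apply: card_compl_lt; rewrite inE in mS.
Qed.

Lemma mu_le (N : finType) (W : {set N} -> bool) (S : {set N}) : (mu W S <= #|N|)%N.
Proof. by rewrite /mu; case: ifP => _; apply: max_card. Qed.

Lemma alpha_fuel_stable (N : finType) (W : {set N} -> bool) (k : N) : forall f (S : {set N}),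
  (mu W S < f)%N -> forall f', (f <= f')%N ->
  alpha_fuel f W k S = alpha_fuel f' W k S.
Proof.
elim=> [|f IH] S // hS [|f'] // hf /=.
case: (decisive W k S) => //; case: (successful W k S) => //=.
congr (_ / _); apply: eq_bigr => C hC; apply: IH => //.
by have := lc_mu hC; move: hS; clear; lia.
Qed.

Lemma alphaE (N : finType) (W : {set N} -> bool) (k : N) (S : {set N}) : alpha W k S =
  if decisive W k S then 1 else if ~~ successful W k S then 0
  else (\sum_(C in loyal_children W S) alpha W k C) / (#|loyal_children W S|)%:R.
Proof.
rewrite {1}/alpha /=; case: (decisive W k S) => //; case: (successful W k S) => //=.
congr (_ / _); apply: eq_bigr => C hC; apply: (@alpha_fuel_stable _ W k #|N|) => //.
by have := lc_mu hC; have := mu_le W S; clear; lia.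
Qed.

Lemma alpha_fuel_ge0 (N : finType) (W : {set N} -> bool) (k : N) f (S : {set N}) : 0 <= alpha_fuel f W k S.
Proof.
elim: f S => [|f IH] S //=.
case: (decisive W k S) => //; case: (successful W k S) => //=.
by apply: divr_ge0 => //; apply: sumr_ge0 => C _.
Qed.

Lemma alpha_ge0 (N : finType) (W : {set N} -> bool) (k : N) (S : {set N}) : 0 <= alpha W k S.
Proof. exact: alpha_fuel_ge0. Qed.

Lemma alpha_yes1 (N : finType) (W : {set N} -> bool) (k : N) (S : {set N}) :
  k \in S -> W S -> ~~ W (S :\ k) -> alpha W k S = 1.
Proof. by move=> kS WS WSk; rewrite alphaE /decisive /yes_decisive kS WS WSk. Qed.

Lemma alpha_no1 (N : finType) (W : {set N} -> bool) (k : N) (S : {set N}) :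
  k \notin S -> ~~ W S -> W (k |: S) -> alpha W k S = 1.
Proof. by move=> kS WS WSk; rewrite alphaE /decisive /no_decisive kS WS WSk orbT. Qed.

Lemma alpha_0in (N : finType) (W : {set N} -> bool) (k : N) (S : {set N}) :
  k \in S -> ~~ W S -> alpha W k S = 0.
Proof.
move=> kS WS; rewrite alphaE /decisive /no_decisive /yes_decisive /successful kS.
by rewrite (negbTE WS).
Qed.

Lemma alpha_losing_all (N : finType) (W : {set N} -> bool) (k : N) (S : {set N}) :
  ~~ W S -> k \notin S -> (forall m, m \notin S -> ~~ W (m |: S)) ->
  alpha W k S = (\sum_(m in ~: S) alpha W k (m |: S)) / (#|~: S|)%:R.
Proof.
move=> WS kS hall; rewrite alphaE /decisive /no_decisive /yes_decisive /successful.
rewrite (negbTE kS) WS (negbTE (hall k kS)) /=.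
have -> : loyal_children W S = [set m |: S | m in ~: S].
  rewrite /loyal_children (negbTE WS).
  have -> // : [set m in ~: S | ~~ W (m |: S)] = ~: S.
  by apply/setP=> m; rewrite !inE andb_idr // => /hall.
have inj : {in ~: S &, injective (fun m => m |: S)}.
  move=> a b; rewrite !inE => aS bS e.
  have : a \in b |: S by rewrite -e setU11.
  by rewrite !inE (negbTE aS) orbF => /eqP.
by rewrite big_imset // card_in_imset.
Qed.

Lemma sumD1 (T : finType) (A : {set T}) (a : T) (F : T -> rat) :
  a \in A -> \sum_(x in A) F x = F a + \sum_(x in A :\ a) F x.
Proof. by move=> aA; rewrite (big_setD1 a aA). Qed.

Lemma yb_lose (N : finType) (W : {set N} -> bool) j (T : {set N}) :
  yes_blocker W j -> j \notin T -> ~~ W T.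
Proof. by move=> hb jT; apply/negP=> /hb; rewrite (negbTE jT). Qed.

Lemma keyB (N : finType) (W : {set N} -> bool) (i j : N) :
  is_svg W -> i != j -> yes_blocker W j ->
  forall S : {set N}, i \notin S -> alpha W j (i |: S) - alpha W j S <= alpha W i S.
Proof.
move=> [Wmono _ _] hij hb S.
move: {2}#|~: S|.+1 (ltnSn #|~: S|) => n; elim: n S => [|n IH] S // hS iS.
have hl := @yb_lose _ _ _ _ hb.
have ge0 := @alpha_ge0 _ W.
have jD : forall T : {set N}, j \notin T :\ j by move=> T; rewrite !inE eqxx.
case: (boolP (j \in S)) => jS.
  have jiS : j \in i |: S by rewrite !inE jS orbT.
  case: (boolP (W (i |: S))) => WiS; last first.
    by rewrite (alpha_0in jiS WiS) sub0r; have := ge0 j S; have := ge0 i S; lra.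
  rewrite (alpha_yes1 jiS WiS (hl _ (jD _))).
  case: (boolP (W S)) => WS.
    by rewrite (alpha_yes1 jS WS (hl _ (jD _))) subrr ge0.
  by rewrite (alpha_no1 iS WS WiS); have := ge0 j S; lra.
have WS := hl _ jS.
have jiS : j \notin i |: S by rewrite !inE negb_or jS andbT eq_sym.
case: (boolP (W (j |: S))) => WjS.
  rewrite (alpha_no1 jS WS WjS) (alpha_no1 jiS (hl _ jiS)).
    by rewrite subrr ge0.
  by apply: Wmono WjS; apply/subsetP=> x; rewrite !inE; case: (x == j) => //= ->; rewrite orbT.
have hall : forall m, m \notin S -> ~~ W (m |: S).
  move=> m mS; case: (eqVneq m j) => [->|mj] //.
  by apply: hl; rewrite !inE negb_or jS andbT eq_sym.
have iC : i \in ~: S by rewrite inE.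
have cpos : (0 < #|~: S|)%N by apply/card_gt0P; exists i.
have cR : (#|~: S|)%:R != 0 :> rat by rewrite pnatr_eq0 -lt0n.
rewrite (alpha_losing_all WS jS hall) (alpha_losing_all WS iS hall).
have claim : (#|~: S|)%:R * alpha W j (i |: S) =
             \sum_(m in ~: S) alpha W j (i |: (m |: S)).
  case: (boolP (W (j |: (i |: S)))) => WjiS.
    rewrite (alpha_no1 jiS (hl _ jiS) WjiS) mulr1.
    rewrite -sumr_const; apply: eq_bigr => m mS; rewrite inE in mS; symmetry.
    case: (eqVneq m j) => [->|mj].
      apply: alpha_yes1; first by rewrite !inE eqxx orbT.
        by rewrite setUCA.
      exact: hl.
    have jimS : j \notin i |: (m |: S) by rewrite !inE !negb_or jS andbT eq_sym hij eq_sym mj.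
    apply: alpha_no1 => //; first exact: hl.
    apply: Wmono WjiS; apply/subsetP=> x; rewrite !inE.
    by case: (x == j) => //=; case: (x == i) => //=; case: (x \in S); rewrite ?orbT.
  have hall' : forall m, m \notin i |: S -> ~~ W (m |: (i |: S)).
    move=> m mS; case: (eqVneq m j) => [->|mj] //.
    apply: hl; rewrite !inE !negb_or; rewrite !inE negb_or in mS.
    by rewrite eq_sym mj eq_sym hij.
  have jC : j \in ~: (i |: S) by rewrite inE.
  have c'pos : (0 < #|~: (i |: S)|)%N by apply/card_gt0P; exists j.
  have c'R : (#|~: (i |: S)|)%:R != 0 :> rat by rewrite pnatr_eq0 -lt0n.
  have eX := alpha_losing_all (hl _ jiS) jiS hall'.
  rewrite (bigD1 i iC) /= setUA setUid.
  have -> : \sum_(m in ~: S | m != i) alpha W j (i |: (m |: S)) =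
            \sum_(m in ~: (i |: S)) alpha W j (m |: (i |: S)).
    apply: eq_big => [m|m _]; first by rewrite !inE negb_or andbC.
    by rewrite setUCA.
  have -> : \sum_(m in ~: (i |: S)) alpha W j (m |: (i |: S)) =
            (#|~: (i |: S)|)%:R * alpha W j (i |: S) by rewrite eX mulrC divfK.
  rewrite [X in X%:R](cardsD1 i) iC natrD mulrDl mul1r; congr (_ + _).
  by rewrite setC_U1.
set c := (#|~: S|)%:R : rat.
set A := alpha W j (i |: S).
set B := \sum_(m in ~: S) alpha W j (m |: S).
have -> : A - B / c = (c * A - B) / c by field.
apply: ler_wpM2r; first by rewrite invr_ge0 ler0n.
rewrite claim /B -sumrB; apply: ler_sum => m; rewrite inE => mS.
case: (eqVneq m i) => [->|mi]; first by rewrite setUA setUid subrr ge0.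
apply: IH; last by rewrite !inE negb_or eq_sym mi.
by have := card_compl_lt mS; move: hS; clear; lia.
Qed.

Lemma keyW (N : finType) (W : {set N} -> bool) (i j : N) :
  i != j -> yes_blocker W j ->
  forall S : {set N}, i \in S -> alpha (donate W j i) i S = alpha W j (j |: S).
Proof.
move=> hij hb S iS; have hl := @yb_lose _ _ _ _ hb.
have jjS : j \in j |: S by rewrite setU11.
case: (boolP (W (j |: S))) => WjS.
  rewrite (alpha_yes1 jjS WjS); last by apply: hl; rewrite !inE eqxx.
  apply: alpha_yes1 => //; first by rewrite /donate iS.
  by rewrite /donate !inE eqxx /= hl // !inE negb_and negbK eqxx.
rewrite (alpha_0in jjS WjS); apply: alpha_0in => //.
by rewrite /donate iS.
Qed.

Lemma keyA (N : finType) (W : {set N} -> bool) (i j : N) :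
  i != j -> yes_blocker W j ->
  forall S : {set N}, i \notin S ->
  alpha (donate W j i) i S = alpha W j (i |: (S :\ j)).
Proof.
move=> hij hb S.
move: {2}#|~: S|.+1 (ltnSn #|~: S|) => n; elim: n S => [|n IH] S // hS iS.
have hl := @yb_lose _ _ _ _ hb.
set Wh := donate W j i.
have hlh : forall T : {set N}, i \notin T -> ~~ Wh T.
  by move=> T iT; rewrite /Wh /donate (negbTE iT) hl // !inE eqxx.
have eR : j |: (i |: (S :\ j)) = j |: (i |: S).
  by apply/setP=> x; rewrite !inE; case: (x == j).
have jR : j \notin i |: (S :\ j).
  by rewrite !inE eqxx /= orbF eq_sym.
have WhiS : Wh (i |: S) = W (j |: (i |: S)) by rewrite /Wh /donate setU11.
case: (boolP (W (j |: (i |: S)))) => WjiS.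
  rewrite (alpha_no1 iS (hlh _ iS)) ?WhiS //.
  by rewrite (alpha_no1 jR (hl _ jR)) // eR.
have hallh : forall m, m \notin S -> ~~ Wh (m |: S).
  move=> m mS; case: (eqVneq m i) => [->|mi]; first by rewrite WhiS.
  by apply: hlh; rewrite !inE negb_or eq_sym mi.
have hallR : forall m, m \notin i |: (S :\ j) -> ~~ W (m |: (i |: (S :\ j))).
  move=> m mS; case: (eqVneq m j) => [->|mj]; first by rewrite eR.
  by apply: hl; rewrite !inE !negb_or eqxx /= eq_sym mj eq_sym hij.
rewrite (alpha_losing_all (hlh _ iS) iS hallh) (alpha_losing_all (hl _ jR) jR hallR).
have iC : i \in ~: S by rewrite inE.
have jC : j \in ~: (i |: (S :\ j)) by rewrite inE.
have Wh0 : alpha Wh i (i |: S) = 0 by apply: alpha_0in; rewrite ?setU11 ?WhiS.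
have W0 : alpha W j (j |: (i |: (S :\ j))) = 0 by apply: alpha_0in; rewrite ?setU11 ?eR.
rewrite (sumD1 _ iC) Wh0 GRing.add0r (sumD1 _ jC) W0 GRing.add0r.
have IH' : forall m, m \notin S -> m != i ->
    alpha Wh i (m |: S) = alpha W j (i |: ((m |: S) :\ j)).
  move=> m mS mi; apply: IH; last by rewrite !inE negb_or eq_sym mi.
  by have := card_compl_lt mS; move: hS; clear; lia.
case: (boolP (j \in S)) => jS.
  have -> : #|~: S| = #|~: (i |: (S :\ j))|.
    apply/eqP; rewrite -(eqn_add2l #|S|) cardsC.
    rewrite -(cardsC (i |: (S :\ j))) eqn_add2r cardsU1 !inE (negbTE iS) andbF /=.
    by rewrite [X in _ == X](cardsD1 j) jS.
  have -> : ~: (i |: (S :\ j)) :\ j = ~: S :\ i.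
    apply/setP=> m; rewrite !inE; case: (eqVneq m j) => [->|mj]; first by rewrite jS andbF.
    by rewrite /= negb_or.
  congr (_ / _); apply: eq_bigr => m.
  rewrite !inE => /andP[mi mS]; rewrite IH' //; congr (alpha W j _).
  have mj : m != j by apply: contraNneq mS => ->.
  apply/setP=> x; rewrite !inE; case: (eqVneq x j) => [->|xj] /=.
    by rewrite (eq_sym j m) (negbTE mj).
  by case: (x == i); case: (x == m).
have eS : S :\ j = S.
  by apply/setP=> x; rewrite !inE; case: (eqVneq x j) => [->|] //; rewrite (negbTE jS).
rewrite eS in hallR jR jC W0 *.
have jC' : j \in ~: S :\ i by rewrite !inE eq_sym hij.
rewrite (sumD1 _ jC') IH' //; last by rewrite eq_sym.
rewrite setU1K //.
set X := alpha W j (i |: S).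
have eX := alpha_losing_all (hl _ jR) jR hallR.
have c'pos : (0 < #|~: (i |: S)|)%N by apply/card_gt0P; exists j.
have c'R : (#|~: (i |: S)|)%:R != 0 :> rat by rewrite pnatr_eq0 -lt0n.
have -> : \sum_(m in ~: S :\ i :\ j) alpha Wh i (m |: S) =
          \sum_(m in ~: (i |: S) :\ j) alpha W j (m |: (i |: S)).
  have -> : ~: S :\ i :\ j = ~: (i |: S) :\ j.
    by apply/setP=> m; rewrite !inE negb_or andbA.
  apply: eq_bigr => m; rewrite !inE negb_or => /andP[mj /andP[mi mS]].
  rewrite IH' //; congr (alpha W j _).
  apply/setP=> x; rewrite !inE; case: (eqVneq x j) => [->|xj] /=.
    by rewrite (eq_sym j m) (negbTE mj) (negbTE jS).
  by case: (x == i); case: (x == m).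
move: eX; rewrite (sumD1 _ jC) (_ : alpha W j (j |: (i |: S)) = 0) // GRing.add0r.
move=> eX; have -> : \sum_(m in ~: (i |: S) :\ j) alpha W j (m |: (i |: S)) =
   (#|~: (i |: S)|)%:R * X by rewrite /X eX mulrC divfK.
have -> : #|~: S| = (#|~: (i |: S)|).+1 by rewrite setC_U1 [LHS](cardsD1 i) iC.
rewrite -addn1 natrD.
set c := (#|~: (i |: S)|)%:R : rat.
have cp : c + 1 != 0.
  have h : 0 <= c by rewrite /c ler0n.
  by apply/eqP; lra.
field. by rewrite cp c'R.
Qed.

Definition tog (T : finType) (k : T) (S : {set T}) := if k \in S then S :\ k else k |: S.

Lemma togK (T : finType) (k : T) : involutive (tog k).
Proof.
move=> S; rewrite /tog; case: (boolP (k \in S)) => kS.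
  by rewrite !inE eqxx /= setD1K.
by rewrite setU11 setU1K.
Qed.

Lemma split_sum (T : finType) (k : T) (F : {set T} -> rat) :
  \sum_(S : {set T}) F S = \sum_(S : {set T}) (if k \in S then 0 else F S + F (k |: S)).
Proof.
have -> : \sum_(S : {set T}) F S = \sum_(S : {set T}) (if k \in S then F S else 0) + \sum_(S : {set T}) (if k \in S then 0 else F S).
  by rewrite -big_split /=; apply: eq_bigr => S _; case: ifP; rewrite ?GRing.addr0 ?GRing.add0r.
rewrite (reindex_inj (inv_inj (togK k))) /=.
rewrite [RHS](eq_bigr (fun S : {set T} => (if k \in S then 0 else F S) + (if k \in S then 0 else F (k |: S)))); last first.
  by move=> S _; case: ifP; rewrite ?GRing.addr0.
rewrite big_split /= addrC; congr (_ + _); apply: eq_bigr => S _.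
rewrite /tog; case: (boolP (k \in S)) => kS.
  by rewrite !inE eqxx.
by rewrite setU11.
Qed.

Lemma main_yes (N : finType) (W : {set N} -> bool) (i j : N) :
  is_svg W -> i != j -> yes_blocker W j ->
  RM (donate W j i) i <= RM W i + RM W j.
Proof.
move=> HW hij hb.
rewrite /RM -mulrDl; apply: ler_wpM2r; first by rewrite invr_ge0 ler0n.
rewrite -big_split /=.
have ge0 := @alpha_ge0 _ W.
rewrite (eq_bigr (fun S : {set N} => if i \in S then alpha W j (j |: S) else alpha W j (i |: (S :\ j)))); last first.
  move=> S _; case: ifP => iS; first exact: keyW.
  by apply: keyA => //; rewrite iS.
rewrite (split_sum j) [X in _ <= X](split_sum j) (split_sum i) [X in _ <= X](split_sum i).
apply: ler_sum => S _.
case: (boolP (i \in S)) => iS; first by rewrite lexx.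
have jiS : (j \in i |: S) = (j \in S) by rewrite !inE eq_sym (negbTE hij).
rewrite jiS.
case: (boolP (j \in S)) => jS; first by rewrite !GRing.add0r lexx.
have ijS : (i \in j |: S) = false by rewrite !inE (negbTE hij) (negbTE iS).
have eS : S :\ j = S.
  by apply/setP=> x; rewrite !inE; case: (eqVneq x j) => [->|] //; rewrite (negbTE jS).
rewrite ijS setU11 setU1K // eS !inE eqxx orbT /=.
have ejj : j |: (j |: (i |: S)) = j |: (i |: S) by rewrite setUA setUid.
rewrite ejj.
have k1 := keyB HW hij hb iS.
have k2 : alpha W j (i |: (j |: S)) - alpha W j (j |: S) <= alpha W i (j |: S).
  by apply: keyB => //; rewrite ijS.
rewrite setUCA in k2.
have := ge0 i (i |: S); have := ge0 i (j |: (i |: S)).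
lra.
Qed.

Definition dualW (N : finType) (W : {set N} -> bool) : {set N} -> bool :=
  fun S => ~~ W (~: S).

Lemma setC_D1C (N : finType) (k : N) (S : {set N}) : ~: (~: S :\ k) = k |: S.
Proof. by rewrite setC_D1 setCK. Qed.

Lemma setC_U1C (N : finType) (k : N) (S : {set N}) : ~: (k |: ~: S) = S :\ k.
Proof. by rewrite setC_U1 setCK. Qed.

Lemma decisive_dual (N : finType) (W : {set N} -> bool) k S :
  decisive (dualW W) k (~: S) = decisive W k S.
Proof.
rewrite /decisive /yes_decisive /no_decisive /dualW !setCK setC_D1C setC_U1C !inE.
by rewrite !negbK orbC.
Qed.

Lemma successful_dual (N : finType) (W : {set N} -> bool) k S :
  successful (dualW W) k (~: S) = successful W k S.
Proof.
rewrite /successful /dualW !setCK !inE !negbK.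
by rewrite orbC.
Qed.

Lemma lc_dual (N : finType) (W : {set N} -> bool) S :
  loyal_children (dualW W) (~: S) = [set ~: C | C in loyal_children W S].
Proof.
rewrite /loyal_children {1}/dualW setCK.
case WS: (W S) => /=; rewrite -imset_comp.
  have -> : [set m in S | ~~ dualW W (m |: ~: S)] = [set m in S | W (S :\ m)].
    by apply/setP=> m; rewrite !inE /dualW setC_U1C negbK.
  by apply: eq_imset => m /=; rewrite setC_D1.
have -> : [set m in ~: S | dualW W (~: S :\ m)] = [set m in ~: S | ~~ W (m |: S)].
  by apply/setP=> m; rewrite !inE /dualW setC_D1C.
by apply: eq_imset => m /=; rewrite setC_U1.
Qed.

Lemma alpha_fuel_dual (N : finType) (W : {set N} -> bool) k f (S : {set N}) :
  alpha_fuel f (dualW W) k (~: S) = alpha_fuel f W k S.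
Proof.
elim: f S => [|f IH] S //=.
rewrite decisive_dual successful_dual; case: (decisive W k S) => //.
case: (successful W k S) => //=.
rewrite lc_dual big_imset /=; last by move=> A B _ _; apply: setC_inj.
rewrite card_imset; last exact: setC_inj.
by congr (_ / _); apply: eq_bigr => C _; rewrite IH.
Qed.

Lemma RM_dual (N : finType) (W : {set N} -> bool) k : RM (dualW W) k = RM W k.
Proof.
rewrite /RM (reindex_inj (@setC_inj N)) /=; congr (_ / _).
by apply: eq_bigr => S _; rewrite /alpha alpha_fuel_dual.
Qed.

Lemma donate_dual (N : finType) (W : {set N} -> bool) j i :
  dualW (donate W j i) = donate (dualW W) j i.
Proof.
apply: functional_extensionality => S; rewrite /dualW /donate inE.
case: (i \in S) => /=; first by rewrite setC_U1.
by rewrite setC_D1.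
Qed.

Theorem lemma1 (N : finType) (W : {set N} -> bool) (i j : N)
  (HW : is_svg W) (hij : i != j)
  (hblock : yes_blocker W j \/ no_blocker W j) :
  RM (donate W j i) i <= RM W i + RM W j.
Proof.
case: hblock => [hb|hb]; first exact: main_yes.
have HW' : is_svg (dualW W).
  case: HW => mono e0 eT; split.
  - move=> S T ST; rewrite /dualW; apply: contra; apply: mono.
    by rewrite setCS.
  - by rewrite /dualW setC0 eT.
  - by rewrite /dualW setCT e0.
have hb' : yes_blocker (dualW W) j.
  move=> S; rewrite /dualW => /hb; by rewrite inE negbK.
rewrite -RM_dual donate_dual -(RM_dual W i) -(RM_dual W j).
exact: main_yes.
Qed.
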